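(* Let $g\ge2$ and $\Sigma_g=\{(z,w)\in(\mathbb{C}\cup\{\infty\})^2: w^{g+1}=z^g(z+1)(z-1)\}$. Let $\eta_1=\frac{dz}{w(z-1)}$, $\eta_2=\frac{w\,dz}{(z+1)(z-1)}$, $\eta_3=\frac{dz}{w(z+1)}$, and for $a_0,a_1,b_0,b_1\in\mathbb{C}$ and nonzero $\alpha,\beta,\gamma\in\mathbb{C}$ set $$\phi_1=\Big(a_0+a_1\big(\tfrac zw\big)^{g-1}\Big)\tfrac{dz}{w}+\alpha\eta_1+\beta\eta_2,\quad \phi_2=\Big(ia_0-ia_1\big(\tfrac zw\big)^{g-1}\Big)\tfrac{dz}{w}+i\alpha\eta_1-i\beta\eta_2,$$ $$\phi_3=\Big(b_0+b_1\big(\tfrac zw\big)^{g-1}\Big)\tfrac{dz}{w}+\beta\eta_2+\gamma\eta_3,\quad \phi_4=\Big(-ib_0+ib_1\big(\tfrac zw\big)^{g-1}\Big)\tfrac{dz}{w}+i\beta\eta_2-i\gamma\eta_3.$$ Then $\sum_{j=1}^4\phi_j^2\equiv0$ if and only if $a_0=-b_0=\frac{\alpha+\gamma}{2}$ and $a_1=-b_1=-\beta$.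
   Context: $\Sigma_g$ denotes the compact Riemann surface (of genus $g$) defined by the given equation, with a single point at $z=\infty$. *)

(* Defs.v *)
From HB Require Import structures.
From mathcomp Require Import all_boot all_order all_algebra.
From mathcomp Require Import complex.
From mathcomp Require Import Rstruct.
Set Implicit Arguments. Unset Strict Implicit. Unset Printing Implicit Defensive.
Import Order.TTheory GRing.Theory Num.Theory.
Local Open Scope ring_scope.
Local Open Scope complex_scope.

Notation C := (complex Rdefinitions.R).

Definition on_curve (g : nat) (z w : C) : Prop :=
  w ^+ g.+1 = z ^+ g * (z + 1) * (z - 1).

(* coefficients of dz in eta_1, eta_2, eta_3 and dz/w *)
Definition eta1 (z w : C) : C := (w * (z - 1))^-1.
Definition eta2 (z w : C) : C := w / ((z + 1) * (z - 1)).
Definition eta3 (z w : C) : C := (w * (z + 1))^-1.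
Definition dzw (z w : C) : C := w^-1.

Definition phi1 (g : nat) (a0 a1 al be : C) (z w : C) : C :=
  (a0 + a1 * (z / w) ^+ g.-1) * dzw z w + al * eta1 z w + be * eta2 z w.
Definition phi2 (g : nat) (a0 a1 al be : C) (z w : C) : C :=
  ('i * a0 - 'i * a1 * (z / w) ^+ g.-1) * dzw z w
  + 'i * al * eta1 z w - 'i * be * eta2 z w.
Definition phi3 (g : nat) (b0 b1 be ga : C) (z w : C) : C :=
  (b0 + b1 * (z / w) ^+ g.-1) * dzw z w + be * eta2 z w + ga * eta3 z w.
Definition phi4 (g : nat) (b0 b1 be ga : C) (z w : C) : C :=
  (- 'i * b0 + 'i * b1 * (z / w) ^+ g.-1) * dzw z w
  + 'i * be * eta2 z w - 'i * ga * eta3 z w.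

(* sum_j phi_j^2 == 0 as a meromorphic quadratic differential on Sigma_g:
   its coefficient w.r.t. dz^2 (a meromorphic function on the connected
   surface Sigma_g) vanishes at every affine point of the curve away from the
   finitely many points with w = 0 (where z in {0,1,-1}), i.e. on a dense open set. *)
Definition sum_sq_vanishes (g : nat) (a0 a1 b0 b1 al be ga : C) : Prop :=
  forall z w : C, on_curve g z w -> w != 0 ->
    (phi1 g a0 a1 al be z w) ^+ 2 + (phi2 g a0 a1 al be z w) ^+ 2
    + (phi3 g b0 b1 be ga z w) ^+ 2 + (phi4 g b0 b1 be ga z w) ^+ 2 = 0.

(* Main.v *)
Require Import Defs.
From HB Require Import structures.
From mathcomp Require Import all_boot all_order all_algebra.
From mathcomp Require Import complex Rstruct.
From mathcomp Require Import ring.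
Import Order.TTheory GRing.Theory Num.Theory.
Local Open Scope ring_scope.

Definition Qp (a0 a1 b0 b1 al be ga z : C) : C :=
  (a0*a1+b0*b1)*(z^+2-1) + a1*al*(z+1) + b1*ga*(z-1)
  + be*(a0+b0)*z*(z^+2-1) + be*al*z*(z+1) + be*ga*z*(z-1).

Lemma key (g : nat) (a0 a1 b0 b1 al be ga z w : C) :
  (1 <= g)%N -> on_curve g z w -> w != 0 ->
  (phi1 g a0 a1 al be z w) ^+ 2 + (phi2 g a0 a1 al be z w) ^+ 2
    + (phi3 g b0 b1 be ga z w) ^+ 2 + (phi4 g b0 b1 be ga z w) ^+ 2
  = 4 * Qp a0 a1 b0 b1 al be ga z / (z * (z^+2 - 1)^+2).
Proof.
move=> g1 hc w0.
have hz : z != 0.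
  apply/negP=> /eqP z0; move: hc; rewrite /on_curve z0 expr0n.
  case: g g1 => // n _ /= /eqP; rewrite !mul0r expf_eq0 /=; exact/negP.
have hz1 : z - 1 != 0.
  apply/negP=> /eqP z0; move: hc; rewrite /on_curve z0 mulr0 => /eqP.
  rewrite expf_eq0 /=; exact/negP.
have hz2 : z + 1 != 0.
  apply/negP=> /eqP z0; move: hc; rewrite /on_curve z0 mulr0 mul0r => /eqP.
  rewrite expf_eq0 /=; exact/negP.
have hT : (z / w) ^+ g.-1 = w ^+ 2 / (z * ((z+1)*(z-1))).
  apply: (mulIf (mulf_neq0 hz (mulf_neq0 hz2 hz1))).
  rewrite mulfVK ?(mulf_neq0 hz (mulf_neq0 hz2 hz1)) //.
  case: g g1 hc => // n _; rewrite /on_curve /= => hc.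
  apply: (mulIf (expf_neq0 n w0)).
  rewrite exprMn exprVn mulrAC divfK ?expf_neq0 //.
  have -> : w ^+ 2 * w ^+ n = w ^+ n.+2 by rewrite -exprD addnC addn2.
  rewrite hc exprS; ring.
set p := a0 * dzw z w + al * eta1 z w.
set q := a1 * (z / w) ^+ g.-1 * dzw z w + be * eta2 z w.
set r := b1 * (z / w) ^+ g.-1 * dzw z w + be * eta2 z w.
set s := b0 * dzw z w + ga * eta3 z w.
have E : (phi1 g a0 a1 al be z w) ^+ 2 + (phi2 g a0 a1 al be z w) ^+ 2
    + (phi3 g b0 b1 be ga z w) ^+ 2 + (phi4 g b0 b1 be ga z w) ^+ 2
    = (p+q)^+2 + 'i^+2 * (p-q)^+2 + (r+s)^+2 + 'i^+2*(r-s)^+2.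
  rewrite /phi1 /phi2 /phi3 /phi4 /p /q /r /s; ring.
rewrite E sqrCi /p /q /r /s hT /dzw /eta1 /eta2 /eta3 /Qp.
have hzz : z ^+ 2 - 1 != 0.
  have -> : z ^+ 2 - 1 = (z + 1) * (z - 1) by ring.
  exact: mulf_neq0.
by field; rewrite hzz hz hz1 hz2 w0.
Qed.

Lemma nz (x : C) (n : nat) : x = n.+1%:R \/ - x = n.+1%:R -> x != 0.
Proof.
have h : (n.+1%:R : C) != 0 by rewrite pnatr_eq0.
by case=> [->|e] //; rewrite -oppr_eq0 e.
Qed.

Ltac nzt := first [ apply: (@nz _ 0%N); (left; ring) || (right; ring)
                  | apply: (@nz _ 1%N); (left; ring) || (right; ring)
                  | apply: (@nz _ 2%N); (left; ring) || (right; ring)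
                  | apply: (@nz _ 3%N); (left; ring) || (right; ring) ].

Theorem lemma7p11 (g : nat) (a0 a1 b0 b1 al be ga : C) :
  (2 <= g)%N -> al != 0 -> be != 0 -> ga != 0 ->
  (sum_sq_vanishes g a0 a1 b0 b1 al be ga <->
   (a0 = (al + ga) / 2 /\ b0 = - a0 /\ a1 = - be /\ b1 = - a1)).
Proof.
move=> g2 hal hbe hga; have g1 : (1 <= g)%N by apply: leq_trans g2.
split.
- move=> H.
  have HQ : forall z : C, z != 0 -> z - 1 != 0 -> z + 1 != 0 ->
      Qp a0 a1 b0 b1 al be ga z = 0.
    move=> z hz hz1 hz2.
    pose w := g.+1.-root (z ^+ g * (z + 1) * (z - 1)).
    have hc : on_curve g z w by rewrite /on_curve /w rootCK.
    have w0 : w != 0.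
      apply/negP=> /eqP w0; move: hc; rewrite /on_curve w0 expr0n /= => /eqP.
      rewrite eq_sym !mulf_eq0 expf_eq0 (negbTE hz) (negbTE hz1) (negbTE hz2).
      by rewrite andbF.
    have := H z w hc w0; rewrite (@key g a0 a1 b0 b1 al be ga z w g1 hc w0) => /eqP.
    have hzz : z ^+ 2 - 1 != 0.
      have -> : z ^+ 2 - 1 = (z + 1) * (z - 1) by ring.
      exact: mulf_neq0.
    have hd : z * (z ^+ 2 - 1) ^+ 2 != 0 by rewrite mulf_neq0 ?expf_neq0.
    rewrite mulf_eq0 invr_eq0 (negbTE hd) orbF mulf_eq0 pnatr_eq0 /=.
    by move/eqP.
  have n0 : forall n : nat, (n.+1%:R : C) != 0 by move=> n; rewrite pnatr_eq0.
  have Q2 := HQ 2 ltac:(nzt) ltac:(nzt) ltac:(nzt).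
  have Qm2 := HQ (-2) ltac:(nzt) ltac:(nzt) ltac:(nzt).
  have Q3 := HQ 3 ltac:(nzt) ltac:(nzt) ltac:(nzt).
  have Qm3 := HQ (-3) ltac:(nzt) ltac:(nzt) ltac:(nzt).
  set c3 := be*(a0+b0).
  set c2 := a0*a1+b0*b1+be*al+be*ga.
  set c1 := a1*al+b1*ga-be*(a0+b0)+be*al-be*ga.
  set c0 := -(a0*a1+b0*b1)+a1*al-b1*ga.
  pose P (z : C) := c3 * z^+3 + c2 * z^+2 + c1 * z + c0.
  have HP : forall z, Qp a0 a1 b0 b1 al be ga z = P z by move=> z; rewrite /P /Qp /c3 /c2 /c1 /c0; ring.
  rewrite !HP in Q2 Qm2 Q3 Qm3.
  have k0 : forall (k : nat) (c : C), k.+1%:R * c = 0 -> c = 0.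
    by move=> k c /eqP; rewrite mulf_eq0 pnatr_eq0 /= => /eqP.
  have e3 : c3 = 0.
    apply: (k0 59%N); rewrite (_ : _ * c3 = 2*(P 3 - P (-3)) - 3 * (P 2 - P (-2))).
      by rewrite Q2 Qm2 Q3 Qm3; ring.
    by rewrite /P; ring.
  have e1 : c1 = 0.
    apply: (k0 59%N); rewrite (_ : _ * c1 = 27*(P 2 - P (-2)) - 8 * (P 3 - P (-3))).
      by rewrite Q2 Qm2 Q3 Qm3; ring.
    by rewrite /P; ring.
  have e2 : c2 = 0.
    apply: (k0 9%N); rewrite (_ : _ * c2 = (P 3 + P (-3)) - (P 2 + P (-2))).
      by rewrite Q2 Qm2 Q3 Qm3; ring.
    by rewrite /P; ring.
  have e0 : c0 = 0.
    apply: (k0 9%N); rewrite (_ : _ * c0 = 9*(P 2 + P (-2)) - 4 * (P 3 + P (-3))).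
      by rewrite Q2 Qm2 Q3 Qm3; ring.
    by rewrite /P; ring.
  have hb0 : b0 = - a0.
    move/eqP: e3; rewrite /c3 mulf_eq0 (negbTE hbe) /= addr_eq0 => /eqP ->.
    by rewrite opprK.
  have ha1 : a1 = - be.
    have : 2 * (al * (a1 + be)) = c0 + c1 + c2 + c3 by rewrite /c0 /c1 /c2 /c3; ring.
    rewrite e0 e1 e2 e3 !addr0 => /(k0 1%N) /eqP; rewrite mulf_eq0 (negbTE hal) /=.
    by rewrite addr_eq0 => /eqP.
  have hb1 : b1 = be.
    have : 2 * (ga * (be - b1)) = c2 + c0 - c1 - c3 by rewrite /c0 /c1 /c2 /c3; ring.
    rewrite e0 e1 e2 e3 !subr0 addr0 => /(k0 1%N) /eqP; rewrite mulf_eq0 (negbTE hga) /=.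
    by rewrite subr_eq0 => /eqP.
  have ha0 : be * (al + ga - 2 * a0) = 0.
    by rewrite -e2 /c2 hb0 ha1 hb1; ring.
  move/eqP: ha0; rewrite mulf_eq0 (negbTE hbe) /= subr_eq0 => /eqP ha0.
  split; first by rewrite ha0; field.
  by rewrite hb0 ha1 hb1 opprK.
- case=> ha0 [hb0 [ha1 hb1]] z w hc w0.
  rewrite (@key g a0 a1 b0 b1 al be ga z w g1 hc w0).
  rewrite (_ : Qp a0 a1 b0 b1 al be ga z = 0) ?mulr0 ?mul0r //.
  rewrite /Qp hb1 hb0 ha1 ha0.
  by field.
Qed.
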